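(* Let $\nabla$ be a connection on an anchored vector bundle $(A,a_A)$ over $M$, let $[x,y]^\nabla=\nabla_xy-\nabla_yx$, and let $R^\nabla(x,y)z=\nabla_x\nabla_yz-\nabla_y\nabla_xz-\nabla_{[x,y]^\nabla}z$. The following are equivalent: (1) for all $x,y\in\Gamma(A)$ the map $z\mapsto R^\nabla(x,y)z$ is $C^\infty(M)$-linear; (2) $(A,[\cdot,\cdot]^\nabla,a_A)$ is a dull algebroid.
   Context: A connection on the anchored bundle $(A,a_A)$ (with $a_A:A\to TM$ a bundle map) is an $\mathbb{R}$-bilinear operator $\nabla:\Gamma(A)\times\Gamma(A)\to\Gamma(A)$ with $\nabla_{fx}y=f\nabla_xy$ and $\nabla_x(fy)=a_A(x)(f)\,y+f\nabla_xy$. A dull algebroid is a triple $(A,[\cdot,\cdot],a_A)$ where $[\cdot,\cdot]$ is a skew-symmetric $\mathbb{R}$-bilinear bracket on $\Gamma(A)$ with $[x,fy]=f[x,y]+a_A(x)(f)y$ and additionally $a_A([x,y])=[a_A(x),a_A(y)]$ for all $x,y\in\Gamma(A)$. *)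

(* Defs.v *)
(* Algebraic (Serre–Swan) rendering of smooth objects:
   K         : the scalar field (the reals, kept abstract),
   R         : the commutative K-algebra C^oo(M),
   V         : the R-module Gamma(A), finitely generated projective,
   vector fields on M : K-linear derivations of R (X(M) = Der(C^oo(M))),
   anchor    : an R-linear map Gamma(A) -> Der(R). *)
From HB Require Import structures.
From mathcomp Require Import all_boot all_order all_algebra.
Set Implicit Arguments. Unset Strict Implicit. Unset Printing Implicit Defensive.
Import Order.TTheory GRing.Theory Num.Theory.
Local Open Scope ring_scope.

Section Defs.
Variables (K : fieldType) (R : comAlgType K) (V : lmodType R).

Definition is_vector_field (D : R -> R) : Prop :=
  [/\ forall f g, D (f + g) = D f + D g,
      forall (c : K) f, D (c *: f) = c *: D f &
      forall f g, D (f * g) = f * D g + D f * g].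

Definition fg_projective : Prop :=
  exists (n : nat) (i : V -> 'rV[R]_n) (p : 'rV[R]_n -> V),
    [/\ forall (f : R) x y, i (f *: x + y) = f *: i x + i y,
        forall (f : R) u v, p (f *: u + v) = f *: p u + p v &
        forall x, p (i x) = x].

(* the anchor a_A : A -> TM, as a C^oo(M)-linear map Gamma(A) -> X(M);
   a x f is the function a_A(x)(f) *)
Definition is_anchor (a : V -> R -> R) : Prop :=
  [/\ forall x, is_vector_field (a x),
      forall x y f, a (x + y) f = a x f + a y f &
      forall (g : R) x f, a (g *: x) f = g * a x f].

Definition is_connection (a : V -> R -> R) (nabla : V -> V -> V) : Prop :=
  [/\ forall x x' y, nabla (x + x') y = nabla x y + nabla x' y,
      forall x y y', nabla x (y + y') = nabla x y + nabla x y',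
      forall (c : K) x y, nabla x ((c%:A : R) *: y) = (c%:A : R) *: nabla x y,
      forall (f : R) x y, nabla (f *: x) y = f *: nabla x y &
      forall (f : R) x y, nabla x (f *: y) = a x f *: y + f *: nabla x y].

Definition conn_bracket (nabla : V -> V -> V) (x y : V) : V :=
  nabla x y - nabla y x.

Definition curvature (nabla : V -> V -> V) (x y z : V) : V :=
  nabla x (nabla y z) - nabla y (nabla x z) - nabla (conn_bracket nabla x y) z.

Definition dull_algebroid (a : V -> R -> R) (br : V -> V -> V) : Prop :=
  [/\
      [/\ forall x x' y, br (x + x') y = br x y + br x' y,
         forall x y y', br x (y + y') = br x y + br x y',
         forall (c : K) x y, br ((c%:A : R) *: x) y = (c%:A : R) *: br x y &
         forall (c : K) x y, br x ((c%:A : R) *: y) = (c%:A : R) *: br x y],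
      forall x y, br x y = - br y x,
      forall (f : R) x y, br x (f *: y) = f *: br x y + a x f *: y &
      forall x y f, a (br x y) f = a x (a y f) - a y (a x f)].

Definition curvature_tensorial (nabla : V -> V -> V) : Prop :=
  forall x y, forall (f : R) z z',
    curvature nabla x y (f *: z + z') =
    f *: curvature nabla x y z + curvature nabla x y z'.

End Defs.

(* Main.v *)
Require Import Defs.
From HB Require Import structures.
From mathcomp Require Import all_boot all_order all_algebra.
Set Implicit Arguments. Unset Strict Implicit. Unset Printing Implicit Defensive.
Import GRing.Theory.
Local Open Scope ring_scope.

Lemma prod_ann (R : comNzRingType) (I : Type) (s : seq I) (x : R) (F G : I -> R) :
  (forall i, x * F i = x * G i) -> x * \prod_(i <- s) F i = x * \prod_(i <- s) G i.
Proof.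
move=> H; elim: s => [|c s IH]; first by rewrite !big_nil.
by rewrite !big_cons mulrA H -mulrA mulrCA IH mulrCA mulrA.
Qed.

Lemma det_ann (R : comNzRingType) n (x : R) (Q : 'M[R]_n) :
  (forall l j, x * Q l j = 0) -> x * \det (1%:M - Q) = x.
Proof.
move=> H.
have E : x * \det (1%:M - Q) = x * \det (1%:M : 'M[R]_n).
  rewrite /determinant !big_distrr; apply: eq_bigr => s _ /=.
  rewrite mulrCA [x * (_ * _)]mulrCA; congr (_ * _).
  apply: prod_ann => i; rewrite !mxE mulrBr H subr0 //.
by rewrite E det1 mulr1.
Qed.

Lemma proj_elem (K : fieldType) (R : comAlgType K) (V : lmodType R) :
  fg_projective V -> exists d : R, (forall v : V, d *: v = 0) /\
    (forall x : R, (forall v : V, x *: v = 0) -> x * d = x).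
Proof.
case=> n [i [p [iL pL pi]]].
have i0 : i 0 = 0.
  have := iL 1 0 0; rewrite scale1r addr0 scale1r.
  by move/(congr1 (fun z => z - i 0)); rewrite addrK subrr.
have iZ f x : i (f *: x) = f *: i x by rewrite -[f *: x]addr0 iL i0 addr0.
have p0 : p 0 = 0.
  have := pL 1 0 0; rewrite scale1r addr0 scale1r.
  by move/(congr1 (fun z => z - p 0)); rewrite addrK subrr.
have pZ f x : p (f *: x) = f *: p x by rewrite -[f *: x]addr0 pL p0 addr0.
have pD x y : p (x + y) = p x + p y by rewrite -[x]scale1r pL !scale1r.
have iD x y : i (x + y) = i x + i y by rewrite -[x]scale1r iL !scale1r.
pose b l := p (delta_mx 0 l).
pose Q := \matrix_(l, j) (i (b l)) 0 j.
have ipQ u : i (p u) = u *m Q.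
  rewrite {1}(row_sum_delta u).
  rewrite (big_morph p pD p0).
  apply/rowP => j; rewrite !mxE.
  rewrite (big_morph i iD i0) summxE; apply: eq_bigr => l _.
  by rewrite pZ iZ !mxE.
have QQ : Q *m Q = Q.
  apply/row_matrixP => l; rewrite row_mul.
  have -> : row l Q = i (b l) by apply/rowP => j; rewrite !mxE.
  by rewrite -ipQ pi.
exists (\det (1%:M - Q)); split.
  move=> v; rewrite -{1}(pi v) -pZ.
  have -> : i v = i v *m Q by rewrite -ipQ pi.
  rewrite scalemxAr -mul_scalar_mx -mul_adj_mx -mulmxA mulmxBl mul1mx QQ subrr.
  by rewrite !mulmx0 p0.
move=> x Hx; apply: det_ann => l j.
rewrite mxE; have -> : x * i (b l) 0 j = (x *: i (b l)) 0 j by rewrite mxE.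
by rewrite -iZ Hx i0 mxE.
Qed.
Lemma zid (V : zmodType) (A B C E F G I J : V) :
  (A + B) + (C + E) - ((F + C) + (B + G)) - (I + J) = (E - G - J) + (A - F - I).
Proof.
rewrite [C + E]addrC [A + B + _]addrACA [B + G]addrC [F + C + _]addrACA [C + B]addrC.
rewrite [- (F + G + _)]opprD [A + E + _ + _]addrACA subrr addr0.
rewrite [- (F + G)]opprD [A + E + _]addrACA [- (I + J)]opprD [A - F + _ + _]addrACA [in RHS]addrC //.
Qed.
Lemma zid2 (V : zmodType) (a b c d e f : V) :
  (a + b) - (c + d) - (e + f) = (a - c - e) + (b - d - f).
Proof. by rewrite !opprD [a + b + _]addrACA [a - c + _ + _]addrACA. Qed.

Lemma vf_const (K : fieldType) (R : comAlgType K) (D : R -> R) :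
  is_vector_field D -> forall c : K, D (c%:A) = 0.
Proof.
case=> Dd Dk Dm c.
have D1 : D 1 = 0.
  have := Dm 1 1; rewrite !mul1r !mulr1.
  by move/(congr1 (fun z => z - D 1)); rewrite addrK subrr.
by rewrite Dk D1 scaler0.
Qed.

Lemma curv_add (K : fieldType) (R : comAlgType K) (V : lmodType R)
  (a : V -> R -> R) (nabla : V -> V -> V) :
  is_connection a nabla -> forall x y z z',
  curvature nabla x y (z + z') = curvature nabla x y z + curvature nabla x y z'.
Proof.
case=> n1 n2 n3 n4 n5 x y z z'.
by rewrite /curvature !n2 zid2.
Qed.

Lemma curv_scal (K : fieldType) (R : comAlgType K) (V : lmodType R)
  (a : V -> R -> R) (nabla : V -> V -> V) :
  is_connection a nabla -> forall x y f z,
  curvature nabla x y (f *: z) = f *: curvature nabla x y z +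
    (a x (a y f) - a y (a x f) - a (conn_bracket nabla x y) f) *: z.
Proof.
case=> n1 n2 n3 n4 n5 x y f z.
rewrite /curvature !n5 !n2 !n5 !scalerBr !scalerBl.
exact: zid.
Qed.

Theorem proposition2p5 (K : fieldType) (R : comAlgType K) (V : lmodType R)
  (a : V -> R -> R) (nabla : V -> V -> V) :
  fg_projective V -> is_anchor a -> is_connection a nabla ->
  (curvature_tensorial nabla <-> dull_algebroid a (conn_bracket nabla)).
Proof.
move=> Hp Ha Hc.
have Hc' := Hc; case: Hc' => n1 n2 n3 n4 n5.
have Ha' := Ha; case: Ha' => avf aD aZ.
have a0 h : a 0 h = 0 by rewrite -(scale0r (0:V)) aZ mul0r.
split=> [Ht|Hd].
  split.
  - split.
    + by move=> x x' y; rewrite /conn_bracket n1 n2 opprD addrACA.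
    + by move=> x y y'; rewrite /conn_bracket n1 n2 opprD addrACA.
    + by move=> c x y; rewrite /conn_bracket n4 n5 vf_const // scale0r add0r scalerBr.
    + by move=> c x y; rewrite /conn_bracket n3 n4 scalerBr.
  - by move=> x y; rewrite /conn_bracket opprB.
  - move=> f x y; rewrite /conn_bracket n5 n4 scalerBr.
    by rewrite [a x f *: y + _]addrC addrAC.
  - move=> x y f.
    set D := a x (a y f) - a y (a x f) - a (conn_bracket nabla x y) f.
    have HD : forall z : V, D *: z = 0.
      move=> z; have := Ht x y f z 0.
      rewrite (curv_add Hc) (curv_scal Hc) => /addIr.
      by rewrite -[X in _ = X]addr0 => /addrI.
    have [d [Hd1 Hd2]] := proj_elem Hp.
    have dD : d * D = 0.
      by rewrite /D !mulrBr -!aZ !Hd1 !a0 !subrr.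
    have D0 : D = 0 by rewrite -(Hd2 D HD) mulrC dD.
    apply/eqP; rewrite eq_sym -subr_eq0; apply/eqP; exact: D0.
move=> x y f z z'.
case: Hd => _ _ _ Han.
by rewrite (curv_add Hc) (curv_scal Hc) Han subrr scale0r addr0.
Qed.
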